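(* Let $\mathcal{S}$ be a state space equipped with a norm $\|\cdot\|$, let $\mathcal{A}$ be a bounded action set, let $f:\mathcal{S}\times\mathcal{A}\to\mathcal{S}$ be discrete-time dynamics $s_{t+1}=f(s_t,a_t)$, let $\ell:\mathcal{S}\to\mathbb{R}$ be a margin function, and let $\gamma\in[0,1)$ be a discount factor. Let $V:\mathcal{S}\to\mathbb{R}$ be the time-discounted Hamilton–Jacobi value function, i.e. $V$ satisfies, for all $s\in\mathcal{S}$, \[ V(s) = (1-\gamma)\,\ell(s) + \gamma \min\Big\{ \ell(s),\ \max_{a\in\mathcal{A}} V(f(s,a)) \Big\}. \] Suppose $\ell$ and $V$ are Lipschitz continuous with Lipschitz constants $L_\ell$ and $L_V$ respectively, and suppose $f(s,a)$ is uniformly Lipschitz in $s$ (uniformly over $a\in\mathcal{A}$) with constant $L_f$, where $\gamma L_f<1$. Then \[ L_V \le L_\ell \cdot \max\left\{1,\ \frac{1-\gamma}{1-\gamma L_f}\right\}. \]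
   Context: A function $g:\mathcal{S}\to\mathbb{R}$ is Lipschitz continuous if there is $L\ge 0$ with $|g(s)-g(\tilde s)|\le L\|s-\tilde s\|$ for all $s,\tilde s\in\mathcal{S}$; the smallest such $L$ is the Lipschitz constant of $g$. The margin function $\ell$ implicitly encodes the failure set $\{s : \ell(s)<0\}$. The maxima over $\mathcal{A}$ in the fixed-point equation are assumed to be attained. *)

(* Defs.v *)
From HB Require Import structures.
From mathcomp Require Import all_boot all_order all_algebra.
From mathcomp Require Import all_classical all_reals all_analysis.
Set Implicit Arguments. Unset Strict Implicit. Unset Printing Implicit Defensive.
Import Order.TTheory GRing.Theory Num.Theory.
Import numFieldNormedType.Exports.
Local Open Scope classical_set_scope.
Local Open Scope ring_scope.

Definition is_lipschitz_const (R : realType) (S : normedModType R)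
  (g : S -> R) (L : R) : Prop :=
  0 <= L /\ forall s t : S, `|g s - g t| <= L * `|s - t|.

Definition lipschitz_cont (R : realType) (S : normedModType R) (g : S -> R) : Prop :=
  exists L, is_lipschitz_const g L.

Definition lipschitz_constant (R : realType) (S : normedModType R) (g : S -> R) : R :=
  inf [set L | is_lipschitz_const g L].

Definition unif_lipschitz_const (R : realType) (S : normedModType R) (Ac : Type)
  (A : set Ac) (f : S -> Ac -> S) (L : R) : Prop :=
  0 <= L /\ forall a, A a -> forall s t : S, `|f s a - f t a| <= L * `|s - t|.

(* Main.v *)
Require Import Defs.
From HB Require Import structures.
From mathcomp Require Import all_boot all_order all_algebra.
From mathcomp Require Import all_classical all_reals all_analysis.
From mathcomp Require Import ring lra.
Import Order.TTheory GRing.Theory Num.Theory.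
Import numFieldNormedType.Exports.
Local Open Scope classical_set_scope.
Local Open Scope ring_scope.

Lemma inf_is_const (R : realType) (S : normedModType R) (g : S -> R) :
  lipschitz_cont g -> is_lipschitz_const g (lipschitz_constant g).
Proof.
move=> [L0 HL0].
have ne : [set L | is_lipschitz_const g L] !=set0 by exists L0.
have lb0 : lbound [set L | is_lipschitz_const g L] 0 by move=> x [].
split; first exact: lb_le_inf.
move=> s t.
have [d0|dpos] := eqVneq `|s - t| 0.
  have [_ H] := HL0; have := H s t; rewrite d0 !mulr0 => ->; by [].
have dp : 0 < `|s - t| by rewrite lt_def dpos normr_ge0.
rewrite -ler_pdivrMr //; apply: lb_le_inf => // x [_ Hx].
by rewrite ler_pdivrMr.
Qed.

Lemma min_diff (R : realType) (a b c e : R) :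
  `|Num.min a b - Num.min c e| <= Num.max `|a - c| `|b - e|.
Proof.
have h1 := ler_norm (a - c); have h2 := ler_norm (b - e).
have h3 : - (a - c) <= `|a - c| by rewrite -normrN ler_norm.
have h4 : - (b - e) <= `|b - e| by rewrite -normrN ler_norm.
have m1 : `|a - c| <= Num.max `|a - c| `|b - e| by rewrite le_max lexx.
have m2 : `|b - e| <= Num.max `|a - c| `|b - e| by rewrite le_max lexx orbT.
rewrite ler_norml; case: (leP a b) => hab; case: (leP c e) => hce.
all: rewrite ?(minElt hab) ?(minEle hab) ?(minElt hce) ?(minEle hce).
all: try (rewrite (minEle hab) || rewrite (min_r (ltW hab))).
all: try (rewrite (minEle hce) || rewrite (min_r (ltW hce))).
all: apply/andP; split; lra.
Qed.

Theorem theorem1 (R : realType) (S : normedModType R) (U : normedModType R)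
  (A : set U) (f : S -> U -> S) (l V : S -> R) (gamma L_f : R) :
  bounded_set A ->
  A !=set0 ->
  0 <= gamma -> gamma < 1 ->
  (* maxima over A are attained *)
  (forall s, exists2 a, A a & forall b, A b -> V (f s b) <= V (f s a)) ->
  (* time-discounted HJ fixed-point equation *)
  (forall s, V s = (1 - gamma) * l s
                   + gamma * Num.min (l s) (sup [set V (f s a) | a in A])) ->
  lipschitz_cont l -> lipschitz_cont V ->
  unif_lipschitz_const A f L_f ->
  gamma * L_f < 1 ->
  lipschitz_constant V <=
    lipschitz_constant l * Num.max 1 ((1 - gamma) / (1 - gamma * L_f)).
Proof.
move=> _ An0 g0 g1 hmax hV lc Vc [Lf0 hf] gLf.
have [L0 hl] := @inf_is_const _ _ _ lc.
have [K0pos hK] := @inf_is_const _ _ _ Vc.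
set L := lipschitz_constant l in L0 hl *.
set K0 := lipschitz_constant V in K0pos hK *.
have supE : forall s, exists2 a, A a & (sup [set V (f s a) | a in A] = V (f s a)
      /\ forall b, A b -> V (f s b) <= V (f s a)).
  move=> s; have [a Aa Ha] := hmax s; exists a => //; split => //.
  apply/le_anti/andP; split.
    by apply: ge_sup; [exists (V (f s a)), a | move=> _ [b Ab <-]; exact: Ha].
  apply: ub_le_sup; last by exists a.
  by exists (V (f s a)) => _ [b Ab <-]; exact: Ha.
set T := (1 - gamma) * L + gamma * Num.max L (K0 * L_f).
have Tc : is_lipschitz_const V T.
  have mx0 : 0 <= Num.max L (K0 * L_f) by rewrite le_max L0.
  split; first by rewrite /T; apply: addr_ge0; apply: mulr_ge0 => //; lra.
  move=> s t; set d := `|s - t|.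
  have d0 : 0 <= d by exact: normr_ge0.
  have hM : `|sup [set V (f s a) | a in A] - sup [set V (f t a) | a in A]| <= K0 * L_f * d.
    have [a Aa [-> Ha]] := supE s; have [b Ab [-> Hb]] := supE t.
    have e1 := hK (f s a) (f t a); have e2 := hK (f s b) (f t b).
    have f1 := hf a Aa s t; have f2 := hf b Ab s t.
    have := Ha b Ab; have := Hb a Aa.
    have q1 : K0 * `|f s a - f t a| <= K0 * (L_f * d) by apply: ler_wpM2l.
    have q2 : K0 * `|f s b - f t b| <= K0 * (L_f * d) by apply: ler_wpM2l.
    have r1 := ler_norm (V (f s a) - V (f t a)).
    have r2 : - (V (f s b) - V (f t b)) <= `|V (f s b) - V (f t b)| by rewrite -normrN ler_norm.
    move=> h1 h2; rewrite ler_norml -mulrA; apply/andP; split; lra.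
  rewrite !hV.
  have hl' := hl s t.
  have hm := @min_diff _ (l s) (sup [set V (f s a) | a in A]) (l t) (sup [set V (f t a) | a in A]).
  have hmx : Num.max `|l s - l t| `|sup [set V (f s a) | a in A] - sup [set V (f t a) | a in A]|
              <= Num.max L (K0 * L_f) * d.
    rewrite ge_max; apply/andP; split.
      by apply: le_trans hl' _; apply: ler_wpM2r => //; rewrite le_max lexx.
    by apply: le_trans hM _; apply: ler_wpM2r => //; rewrite le_max lexx orbT.
  pose a1 := l s - l t; pose m1 := Num.min (l s) (sup [set V (f s a) | a in A]) - Num.min (l t) (sup [set V (f t a) | a in A]).
  have -> : (1 - gamma) * l s + gamma * Num.min (l s) (sup [set V (f s a) | a in A]) -
    ((1 - gamma) * l t + gamma * Num.min (l t) (sup [set V (f t a) | a in A])) =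
    (1 - gamma) * a1 + gamma * m1 by rewrite /a1 /m1; ring.
  have e1 : `|(1-gamma) * a1| <= (1-gamma)*(L*d).
    rewrite normrM ger0_norm; last lra.
    by apply: ler_wpM2l; [lra|exact: hl'].
  have e2 : `|gamma * m1| <= gamma*(Num.max L (K0 * L_f)*d).
    rewrite normrM ger0_norm //; apply: ler_wpM2l => //; exact: le_trans hm hmx.
  have -> : T * d = (1-gamma) * (L*d) + gamma * (Num.max L (K0 * L_f)*d) by rewrite /T; ring.
  exact: le_trans (ler_normD _ _) (lerD e1 e2).
have KT : K0 <= T.
  by apply: ge_inf; [exists 0 => x [] | ].
rewrite /T in KT.
have c1 : 1 <= Num.max 1 ((1 - gamma) / (1 - gamma * L_f)) by rewrite le_max lexx.
have c2 : (1 - gamma) / (1 - gamma * L_f) <= Num.max 1 ((1 - gamma) / (1 - gamma * L_f))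
  by rewrite le_max lexx orbT.
case: (leP (K0 * L_f) L) => hc.
  rewrite (max_l hc) in KT.
  apply: le_trans (_ : L * 1 <= _); first lra.
  exact: ler_wpM2l.
rewrite (max_r (ltW hc)) in KT.
apply: le_trans (ler_wpM2l L0 c2).
have pos : 0 < 1 - gamma * L_f by lra.
rewrite mulrA ler_pdivlMr //.
nra.
Qed.
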